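(* Assume there exist covering templates $\mathbf x^{(1)},\dots,\mathbf x^{(M)}\in\mathbb R^s$ and representation functions $f_{\theta_1},\dots,f_{\theta_M}$ such that the matrix $F\in\mathbb R^{M\times M}$, $F_{i,d}=f_{\theta_d}(\mathbf x^{(i)})$, has pairwise distinct rows and has a column that is constant and non-zero (i.e. some $d$ and $c\neq0$ with $f_{\theta_d}(\mathbf x^{(i)})=c$ for all $i\in[M]$). Consider the shallow fully-connected network with ReLU activation whose $y$-th score function is $$h^{S(fc)}_y(X)=\sum_{z=1}^Z a^y_z\max\Big\{0,\sum_{i=1}^N\sum_{d=1}^M A^z_{i,d}\,f_{\theta_d}(\mathbf x_i)\Big\},\qquad A^z\in\mathbb R^{N\times M},\ \mathbf a^y\in\mathbb R^Z.$$ Then this network is universal: for every tensor $\mathcal A\in\mathbb R^{M\times\cdots\times M}$ of order $N$ there exist $Z$ and weights $\{A^z\}_{z\in[Z]}$, $\mathbf a^y$ such that $\mathcal A(h^{S(fc)}_y)=\mathcal A$ (in fact $Z\ge M^N$ suffices).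
   Context: Inputs are $X=(\mathbf x_1,\dots,\mathbf x_N)\in(\mathbb R^s)^N$. For templates $\mathbf x^{(1)},\dots,\mathbf x^{(M)}\in\mathbb R^s$, the grid tensor of $h:(\mathbb R^s)^N\to\mathbb R$ is the order-$N$ tensor with $\mathcal A(h)_{d_1,\dots,d_N}=h(\mathbf x^{(d_1)},\dots,\mathbf x^{(d_N)})$. Templates are covering if score functions are identified whenever their grid tensors coincide; a network is universal if (w.r.t. covering templates) every tensor is the grid tensor of one of its score functions. *)

(* Defs.v *)
From mathcomp Require Import all_boot all_order all_algebra.
From mathcomp Require Import reals.
Set Implicit Arguments. Unset Strict Implicit. Unset Printing Implicit Defensive.
Import Order.TTheory GRing.Theory Num.Theory.
Local Open Scope ring_scope.

Definition input (R : realType) (N s : nat) := 'I_N -> 'rV[R]_s.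

Definition tensor (R : realType) (N M : nat) := ('I_N -> 'I_M) -> R.

Definition grid_tensor (R : realType) (N M s : nat) (xs : 'I_M -> 'rV[R]_s)
  (h : input R N s -> R) : tensor R N M :=
  fun d => h (fun i => xs (d i)).

Definition rep_matrix (R : realType) (M s : nat) (xs : 'I_M -> 'rV[R]_s)
  (f : 'I_M -> 'rV[R]_s -> R) : 'M[R]_M :=
  \matrix_(i < M, d < M) f d (xs i).

Definition relu (R : realType) (x : R) : R := Num.max 0 x.

Definition shallow_fc_score (R : realType) (N M s Z : nat)
  (f : 'I_M -> 'rV[R]_s -> R) (A : 'I_Z -> 'M[R]_(N, M)) (a : 'I_Z -> R)
  (X : input R N s) : R :=
  \sum_(z < Z) a z * relu (\sum_(i < N) \sum_(d < M) A z i d * f d (X i)).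

(* Main.v *)
Require Import Defs.
From mathcomp Require Import all_boot all_order all_algebra.
From mathcomp Require Import reals.
From mathcomp Require Import lra.
From Stdlib Require Import FunctionalExtensionality.
Set Implicit Arguments. Unset Strict Implicit. Unset Printing Implicit Defensive.
Import Order.TTheory GRing.Theory Num.Theory.
Local Open Scope ring_scope.

Lemma nonroot_exists (R : realType) (p : {poly R}) : p != 0 ->
  exists m : nat, p.[m%:R] != 0.
Proof.
move=> p0.
have [/hasP [m _ Hm]|/hasPn H] := boolP (has (fun m : nat => p.[m%:R] != 0) (iota 0 (size p))).
  by exists m.
suff: (size p < size p)%N by rewrite ltnn.
rewrite -{1}(size_iota 0 (size p)) -(size_map (fun i : nat => (i%:R : R))).
apply: max_poly_roots => //.
- apply/allP => x /mapP [i Hi ->]; rewrite /root; have := H i Hi; by rewrite negbK.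
- rewrite map_inj_uniq ?iota_uniq // => a b /eqP; by rewrite eqr_nat => /eqP.
Qed.

Lemma gen_t (R : realType) (P : finType) (Q : pred P) (n : nat) (c : P -> 'I_n -> R) :
  (forall p, Q p -> exists k, c p k != 0) ->
  exists t : R, forall p, Q p -> \sum_(k < n) c p k * t ^+ k != 0.
Proof.
move=> Hc.
pose q p := \sum_(k < n) c p k *: 'X^k.
have Hq p : Q p -> q p != 0.
  move=> /Hc [k Hk]; apply/eqP => E; move: (congr1 (fun r : {poly R} => r`_k) E) => /=.
  rewrite coef0 /q coef_sum (bigD1 k) //= coefZ coefXn eqxx mulr1 big1 ?addr0.
    by move/eqP: Hk.
  move=> j Hj; rewrite coefZ coefXn; case: eqP; last by rewrite mulr0.
  by move=> /val_inj E2; move: Hj; rewrite E2 eqxx.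
have : \prod_(p | Q p) q p != 0 by apply/prodf_neq0.
move=> /nonroot_exists [m]; rewrite horner_prod => /prodf_neq0 H.
exists m%:R => p /H; rewrite /q horner_sum.
by under eq_bigr do rewrite hornerZ hornerXn.
Qed.
Lemma interp (R : realType) (G : finType) (S : G -> R) : injective S ->
  forall n (D : {set G}), (#|D| < n)%N -> forall (L : R), (forall e, e \in D -> L < S e) ->
  forall T : G -> R, exists (c b : G -> R),
   [/\ (forall e, e \in D -> L <= b e), (forall e, e \in D -> b e < S e) &
   forall g, g \in D -> T g = \sum_(e in D) c e * Num.max 0 (S g - b e)].
Proof.
move=> Sinj; elim=> [//|n IH] D HD L HL T.
have [->|/set0Pn [x Hx]] := eqVneq D set0.
  by exists (fun _ => 0), (fun _ => 0); split=> e; rewrite in_set0.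
have [e0 He0 Hmin] : exists2 e0, e0 \in D & forall e, e \in D -> S e0 <= S e.
  case: (@arg_minP _ R G x (mem D) S Hx) => e0 H1 H2; by exists e0.
set D' := D :\ e0.
have HD' : (#|D'| < n)%N.
  by move: HD; rewrite (cardsD1 e0 D) He0 add1n ltnS.
have HL' e : e \in D' -> S e0 < S e.
  rewrite in_setD1 => /andP [ne He]; rewrite lt_neqAle Hmin // andbT.
  by apply/eqP => /Sinj E; move: ne; rewrite E eqxx.
have pos0 : 0 < S e0 - L by rewrite subr_gt0 HL.
pose c0 := T e0 / (S e0 - L).
pose T' g := T g - c0 * Num.max 0 (S g - L).
have [c' [b' [Hb1 Hb2 Heq]]] := IH D' HD' (S e0) HL' T'.
exists (fun e => if e == e0 then c0 else c' e), (fun e => if e == e0 then L else b' e).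
split.
- move=> e He; case: eqP => [_|/eqP ne]; first exact: lexx.
  have He' : e \in D' by rewrite in_setD1 ne He.
  by apply: le_trans (Hb1 _ He'); apply: ltW; apply: HL.
- move=> e He; case: eqP => [->|/eqP ne]; first exact: HL.
  by apply: Hb2; rewrite in_setD1 ne He.
move=> g Hg; rewrite (bigD1 e0) //= eqxx.
have -> : \sum_(i in D | i != e0) (if i == e0 then c0 else c' i) *
    Num.max 0 (S g - (if i == e0 then L else b' i)) =
    \sum_(i in D') c' i * Num.max 0 (S g - b' i).
  rewrite [RHS]big_mkcond [LHS]big_mkcond; apply: eq_bigr => i _.
  rewrite in_setD1 andbC; case: (i == e0) => //.
have [->|ne] := eqVneq g e0.
  rewrite big1 ?addr0.
    by rewrite max_r ?ltW // /c0 divfK // gt_eqF.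
  move=> i Hi; rewrite max_l ?mulr0 //.
  by rewrite subr_le0; apply: le_trans (Hb1 _ Hi).
have Hg' : g \in D' by rewrite in_setD1 ne Hg.
by rewrite -Heq // /T' addrC subrK.
Qed.

Lemma sum_insub (R : realType) (n Z : nat) (H : 'I_n -> R) : (n <= Z)%N ->
  \sum_(z < Z) oapp H 0 (insub (val z)) = \sum_(k < n) H k.
Proof.
move=> le.
rewrite [RHS](eq_bigr (fun k : 'I_n => oapp H 0 (insub (val k)))); last first.
  by move=> k _; rewrite valK.
rewrite (big_ord_widen _ (fun m => oapp H 0 (insub m)) le).
rewrite (bigID (fun z : 'I_Z => (z < n)%N)) /= [X in _ + X]big1 ?addr0 //.
by move=> z /negbTE Hz; rewrite insubF.
Qed.

Theorem claim7 (R : realType) (N M s : nat) (xs : 'I_M -> 'rV[R]_s)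
  (f : 'I_M -> 'rV[R]_s -> R) :
  (0 < N)%N ->
  (* F has pairwise distinct rows *)
  (forall i j : 'I_M, row i (rep_matrix xs f) = row j (rep_matrix xs f) -> i = j) ->
  (* F has a constant non-zero column *)
  (exists (d : 'I_M) (c : R), c != 0 /\ forall i : 'I_M, rep_matrix xs f i d = c) ->
  forall T : tensor R N M,
    forall Z : nat, (M ^ N <= Z)%N ->
      exists (A : 'I_Z -> 'M[R]_(N, M)) (a : 'I_Z -> R),
        forall idx : 'I_N -> 'I_M,
          grid_tensor xs (shallow_fc_score f A a) idx = T idx.
Proof.
move=> N0 Hrows [d0 [c0 [c00 Hcol]]] T Z HZ.
set F := rep_matrix xs f.
have FE k d : F k d = f d (xs k) by rewrite /F /rep_matrix mxE.
have H1 : forall p : ('I_M * 'I_M)%type, p.1 != p.2 -> exists d, F p.1 d - F p.2 d != 0.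
  move=> [k l] /= ne.
  have [/existsP [d Hd]|/existsPn Hn] := boolP [exists d, F k d != F l d].
    by exists d; rewrite subr_eq0.
  suff E : k = l by rewrite E eqxx in ne.
  apply: Hrows; apply/rowP => j; rewrite !mxE -!FE.
  by move/negPn/eqP: (Hn j).
have [t1 Ht1] := @gen_t R ('I_M * 'I_M)%type (fun p => p.1 != p.2) M
  (fun p d => F p.1 d - F p.2 d) H1.
pose v k := \sum_(d < M) F k d * t1 ^+ d.
have vinj k l : k != l -> v k != v l.
  move=> ne; rewrite -subr_eq0 /v -sumrB.
  under eq_bigr do rewrite -mulrBl; exact: (Ht1 (k, l) ne).
pose G := {ffun 'I_N -> 'I_M}.
have H2 : forall p : (G * G)%type, p.1 != p.2 -> exists i, v (p.1 i) - v (p.2 i) != 0.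
  move=> [g h] /= ne.
  have [/existsP [i Hi]|/existsPn Hn] := boolP [exists i, g i != h i].
    by exists i; rewrite subr_eq0 vinj.
  suff E : g = h by rewrite E eqxx in ne.
  by apply/ffunP => i; move/negPn/eqP: (Hn i).
have [t2 Ht2] := @gen_t R (G * G)%type (fun p => p.1 != p.2) N
  (fun p i => v (p.1 i) - v (p.2 i)) H2.
pose Sg (g : 'I_N -> 'I_M) := \sum_(i < N) v (g i) * t2 ^+ i.
pose S (g : G) := Sg g.
have Sinj : injective S.
  move=> g h E; apply/eqP; apply/negPn/negP => ne.
  move: (Ht2 (g, h) ne) => /=.
  under eq_bigr do rewrite mulrBl.
  by rewrite sumrB subr_eq0; move: E; rewrite /S /Sg => ->; rewrite eqxx.
pose L := - (\sum_(g : G) `|S g|) - 1.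
have HL e : e \in [set: G] -> L < S e.
  move=> _.
  have h1 : `|S e| <= \sum_(g : G) `|S g|.
    by rewrite (bigD1 e) //= lerDl sumr_ge0.
  have h2 : - S e <= `|S e| by rewrite -normrN ler_norm.
  rewrite /L; lra.
have [c [b [_ _ Heq]]] := @interp R G S Sinj #|G|.+1 [set: G] (ltac:(by rewrite cardsT)) L HL
  (fun g => T (fun i => g i)).
pose i0 : 'I_N := Ordinal N0.
pose Am (e : G) : 'M[R]_(N, M) := \matrix_(i, d) (t2 ^+ i * t1 ^+ d +
  (if (i == i0) && (d == d0) then - b e / c0 else 0)).
have pre (e : G) (idx : 'I_N -> 'I_M) :
  \sum_(i < N) \sum_(d < M) Am e i d * f d (xs (idx i)) = Sg idx - b e.
  under eq_bigr do under eq_bigr do rewrite mxE mulrDl -FE.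
  under eq_bigr do rewrite big_split /=.
  rewrite big_split /=; congr (_ + _).
    apply: eq_bigr => i _; rewrite /v mulr_suml; apply: eq_bigr => d _.
    by rewrite mulrC [t2 ^+ i * _]mulrC mulrA.
  rewrite (bigD1 i0) //= [X in _ + X]big1 ?addr0; last first.
    move=> i /negbTE ->; rewrite big1 // => d _; by rewrite mul0r.
  rewrite (bigD1 d0) //= [X in _ + X]big1 ?addr0; last first.
    by move=> d /negbTE Hd; rewrite ?eqxx Hd ?andbF mul0r.
  by rewrite !eqxx Hcol divfK.
pose A (z : 'I_Z) := oapp (fun k : 'I_#|G| => Am (enum_val k)) 0 (insub (val z)).
pose a (z : 'I_Z) := oapp (fun k : 'I_#|G| => c (enum_val k)) 0 (insub (val z)).
exists A, a => idx.
have cardG : #|G| = (M ^ N)%N by rewrite card_ffun !card_ord.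
rewrite /grid_tensor /shallow_fc_score.
pose H (e : G) := c e * relu (Sg idx - b e).
rewrite (eq_bigr (fun z : 'I_Z => (oapp (fun k : 'I_#|G| => H (enum_val k)) 0 (insub (val z)) : R))); last first.
  move=> z _; rewrite /A /a; case: insub => [k|] /=; last by rewrite mul0r.
  by rewrite pre.
rewrite sum_insub ?cardG // -(big_enum_val (A := G)).
have E1 : (fun i => [ffun i => idx i] i) = idx.
  by apply: functional_extensionality => i; rewrite ffunE.
rewrite -[T idx](congr1 T E1) (Heq [ffun i => idx i] (in_setT _)).
have ES : S [ffun i => idx i] = Sg idx.
  by rewrite /S /Sg; apply: eq_bigr => i _; rewrite ffunE.
rewrite ES; apply: eq_big => [e|e _]; first by rewrite in_setT.
by [].
Qed.
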